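(* Let ${\cal G}_{sym}$ be the class of scheduling games on related machines with arbitrary priority lists in which all jobs have the same processing-time function (either all $p(t)=b+at$ with $b,a\ge0$, or all $p(t)=\max\{\tau,b-at\}$ with $b,a\ge0$, $\tau>0$). Then $PoA({\cal G}_{sym})=PoS({\cal G}_{sym})=1$; that is, every game in ${\cal G}_{sym}$ has a pure Nash equilibrium and every pure Nash equilibrium has minimum makespan.
   Context: Scheduling game: a finite set $N$ of $n\ge1$ jobs (players) and a set $M$ of machines. Machine $j$ has speed $s_j>0$ and a priority list $\pi_j$, a bijection $N\to\{1,\dots,n\}$; job $u$ has higher priority than $v$ on $j$ iff $\pi_j(u)<\pi_j(v)$. A profile $\sigma\in M^N$ assigns each job to a machine. On machine $j$, the jobs assigned to it, listed in increasing $\pi_j$-order as $i_1,i_2,\dots$, are processed without idle time: $S_{i_1}(\sigma)=0$, $C_{i_k}(\sigma)=S_{i_k}(\sigma)+p_{i_k}(S_{i_k}(\sigma))/s_j$, $S_{i_{k+1}}(\sigma)=C_{i_k}(\sigma)$. The cost of job $i$ is $C_i(\sigma)$. A pure Nash equilibrium (NE) is a profile in which no job can strictly decrease its completion time by unilaterally changing its machine. Makespan $C_{\max}(\sigma)=\max_iC_i(\sigma)$; $OPT(G)=\min_\sigma C_{\max}(\sigma)$ over all profiles. For a game with at least one NE, $PoA(G)=\max_{\sigma\text{ NE}}C_{\max}(\sigma)/OPT(G)$ and $PoS(G)=\min_{\sigma\text{ NE}}C_{\max}(\sigma)/OPT(G)$; for a class, the supremum over its games. *)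

(* Defs.v *)
From HB Require Import structures.
From mathcomp Require Import all_boot all_order all_algebra all_fingroup.
From mathcomp Require Import reals.
Set Implicit Arguments. Unset Strict Implicit. Unset Printing Implicit Defensive.
Import Order.TTheory GRing.Theory Num.Theory.
Local Open Scope ring_scope.

Section Sched.
Variables (R : realType) (n : nat) (M : finType).
(* common processing-time function of all jobs, speeds, priority lists *)
Variables (p : R -> R) (s : M -> R) (pi : M -> {perm 'I_n}).

Definition profile := {ffun 'I_n -> M}.

(* jobs assigned to machine j by sigma, in increasing priority order
   (i.e. increasing pi j-rank) *)
Definition queue (sigma : profile) (j : M) : seq 'I_n :=
  [seq ((pi j)^-1)%g k | k <- enum 'I_n & sigma (((pi j)^-1)%g k) == j].

Fixpoint ctime (sp : R) (t : R) (l : seq 'I_n) (i : 'I_n) : R :=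
  match l with
  | [::] => 0
  | u :: l' => let c := t + p t / sp in
               if u == i then c else ctime sp c l' i
  end.

Definition C (sigma : profile) (i : 'I_n) : R :=
  ctime (s (sigma i)) 0 (queue sigma (sigma i)) i.

Definition deviate (sigma : profile) (i : 'I_n) (j : M) : profile :=
  [ffun k => if k == i then j else sigma k].

Definition is_NE (sigma : profile) : Prop :=
  forall (i : 'I_n) (j : M), C sigma i <= C (deviate sigma i j) i.

Definition Cmax (sigma : profile) : R := \big[Num.max/0]_(i < n) C sigma i.

Definition min_makespan (sigma : profile) : Prop :=
  forall tau : profile, Cmax sigma <= Cmax tau.
End Sched.

Definition sym_proc (R : realType) (p : R -> R) : Prop :=
  (exists a b : R, 0 <= a /\ 0 <= b /\ p = (fun t => b + a * t)) \/
  (exists a b tau : R, 0 <= a /\ 0 <= b /\ 0 < tau /\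
     p = (fun t => Num.max tau (b - a * t))).

(* Main.v *)
Require Import Defs.
From HB Require Import structures.
From mathcomp Require Import all_boot all_order all_algebra all_fingroup.
From mathcomp Require Import reals.
From mathcomp Require Import zify.
Import Order.TTheory GRing.Theory Num.Theory.
Local Open Scope ring_scope.

Set Implicit Arguments. Unset Strict Implicit. Unset Printing Implicit Defensive.

Definition fT (R : realType) (p : R -> R) (sp t : R) := t + p t / sp.
Definition Tk (R : realType) (p : R -> R) (k : nat) (sp : R) := iter k (fT p sp) 0.

Definition rankS n (M : finType) (pi : M -> {perm 'I_n}) (sigma : profile n M)
  (S : {set 'I_n}) (j : M) (i : 'I_n) : nat :=
  #|[set u in S | (sigma u == j) && (pi j u < pi j i)%N]|.
Definition cntS n (M : finType) (sigma : profile n M) (S : {set 'I_n}) (j : M) : nat :=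
  #|[set u in S | sigma u == j]|.

Lemma ctimeE (R : realType) n (p : R -> R) sp t (l : seq 'I_n) i :
  ctime p sp t l i = if i \in l then iter (index i l).+1 (fT p sp) t else 0.
Proof.
elim: l t => [|u l IH] t //=.
rewrite inE eq_sym; case: eqP => [->|_] //=.
rewrite IH; case: ifP => // _.
by rewrite -[t + _]/(fT p sp t) -iterSr.
Qed.

Lemma sorted_index n (s : seq 'I_n) (x : 'I_n) :
  sorted (fun a b : 'I_n => (a < b)%N) s -> x \in s ->
  index x s = count (fun y : 'I_n => (y < x)%N) s.
Proof.
elim: s => [|y s IH] //= hs.
have hall : all (fun b : 'I_n => (y < b)%N) s.
  have tr : transitive (fun a b : 'I_n => (a < b)%N).
    by move=> a b c; apply: ltn_trans.
  exact: (order_path_min tr hs).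
rewrite inE eq_sym; case: eqP => [<-|ne] /=.
  move=> _; rewrite ltnn add0n; apply/esym/eqP; rewrite -leqn0 leqNgt -has_count.
  apply/hasPn => z zs; rewrite -leqNgt ltnW //.
  by move/allP: hall => /(_ z zs).
move=> xs; rewrite IH //; last exact: path_sorted hs.
by move/allP: hall => /(_ x xs) ->.
Qed.

Lemma queue_index n (M : finType) (pi : M -> {perm 'I_n}) (sigma : profile n M) i :
  i \in queue pi sigma (sigma i) /\
  index i (queue pi sigma (sigma i)) = rankS pi sigma setT (sigma i) i.
Proof.
rewrite /queue; set j := sigma i; set P := pi j.
set Q := (fun k : 'I_n => sigma ((P^-1)%g k) == j).
have hi : i = (P^-1)%g (P i) by rewrite permK.
have hx : P i \in [seq k <- enum 'I_n | Q k].
  by rewrite mem_filter mem_enum andbT /Q -hi.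
rewrite [in X in X \in _]hi [in X in index X _]hi mem_map ?index_map //; try exact: perm_inj.
split => //.
have srt : sorted (fun a b : 'I_n => (a < b)%N) [seq k <- enum 'I_n | Q k].
  apply: sorted_filter; first by move=> a b c; apply: ltn_trans.
  by have := iota_ltn_sorted 0 n; rewrite -val_enum_ord sorted_map.
rewrite (sorted_index srt hx) count_filter enumT.
rewrite /rankS -(card_imset _ (@perm_inj _ P)) cardE /enum_mem size_filter.
apply: eq_count => y /=.
rewrite -[y in RHS](permKV P y) mem_imset; last exact: perm_inj.
by rewrite !inE /Q andbC permKV.
Qed.

Lemma C_rank (R : realType) n (M : finType) (p : R -> R) (s : M -> R)
  (pi : M -> {perm 'I_n}) (sigma : profile n M) i :
  C p s pi sigma i = Tk p (rankS pi sigma setT (sigma i) i).+1 (s (sigma i)).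
Proof.
rewrite /C ctimeE; have [-> ->] := queue_index pi sigma i; by [].
Qed.

Lemma C_dev (R : realType) n (M : finType) (p : R -> R) (s : M -> R)
  (pi : M -> {perm 'I_n}) (sigma : profile n M) i j :
  C p s pi (deviate sigma i j) i = Tk p (rankS pi sigma setT j i).+1 (s j).
Proof.
rewrite C_rank /deviate ffunE eqxx /rankS; congr (Tk _ _.+1 _).
apply: eq_card => u; rewrite !inE ffunE.
case: (eqVneq u i) => [->|//]; by rewrite ltnn !andbF.
Qed.

Lemma Tk_ge0 (R : realType) (p : R -> R) sp k :
  (forall t, 0 <= t -> 0 <= p t) -> 0 < sp -> 0 <= Tk p k sp.
Proof.
move=> hp hs; elim: k => [|k IH] //=.
rewrite /fT addr_ge0 // divr_ge0 ?hp // ltW //.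
Qed.

Lemma Tk_mono (R : realType) (p : R -> R) sp k k' :
  (forall t, 0 <= t -> 0 <= p t) -> 0 < sp -> (k <= k')%N -> Tk p k sp <= Tk p k' sp.
Proof.
move=> hp hs; elim: k' => [|k' IH]; first by rewrite leqn0 => /eqP->.
rewrite leq_eqVlt ltnS => /orP[/eqP->//|/IH h].
apply: (le_trans h); rewrite [Tk _ k'.+1 _]/= /fT -[X in X <= _]addr0 lerD2l.
by rewrite divr_ge0 ?hp ?Tk_ge0 // ltW.
Qed.

Lemma Cmax_ge (R : realType) n (M : finType) (p : R -> R) (s : M -> R)
  (pi : M -> {perm 'I_n}) (sigma : profile n M) i :
  C p s pi sigma i <= Cmax p s pi sigma.
Proof. by rewrite /Cmax (bigD1 i) //= le_max lexx. Qed.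

Lemma Cmax_le (R : realType) n (M : finType) (p : R -> R) (s : M -> R)
  (pi : M -> {perm 'I_n}) (sigma : profile n M) x :
  0 <= x -> (forall i, C p s pi sigma i <= x) -> Cmax p s pi sigma <= x.
Proof.
move=> h0 h; rewrite /Cmax; elim/big_ind: _ => // a b ha hb.
by rewrite ge_max ha hb.
Qed.

Lemma rank_lt_cnt n (M : finType) (pi : M -> {perm 'I_n}) (sigma : profile n M) i :
  (rankS pi sigma setT (sigma i) i < cntS sigma setT (sigma i))%N.
Proof.
have hi : i \in [set u in [set: 'I_n] | sigma u == sigma i] by rewrite !inE eqxx.
rewrite /cntS (cardsD1 i) hi add1n ltnS.
apply: subset_leq_card; apply/subsetP => u; rewrite !inE /=.
case/andP => ha hb; rewrite ha andbT; apply/eqP => ui.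
by move: hb; rewrite ui ltnn.
Qed.

Lemma rank_le_cnt n (M : finType) (pi : M -> {perm 'I_n}) (sigma : profile n M) j i :
  (rankS pi sigma setT j i <= cntS sigma setT j)%N.
Proof.
apply: subset_leq_card; apply/subsetP => u; rewrite !inE.
by move=> /and3P[_ -> _].
Qed.

Lemma last_job n (M : finType) (pi : M -> {perm 'I_n}) (sigma : profile n M) j :
  (0 < cntS sigma setT j)%N ->
  exists u, sigma u = j /\ rankS pi sigma setT j u = (cntS sigma setT j).-1.
Proof.
move=> /card_gt0P [u0 hu0].
case: (@arg_maxnP _ u0 (fun v => v \in [set u in setT | sigma u == j])
   (fun v => nat_of_ord (pi j v)) hu0) => u hu hmax.
exists u; split; first by move: hu; rewrite !inE => /eqP.
rewrite /cntS (cardsD1 u) hu add1n /=.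
apply: eq_card => v; rewrite !inE.
case: (eqVneq v u) => [->|vu] /=; first by rewrite ltnn !andbF.
case hv: (sigma v == j) => //=.
have := hmax v; rewrite !inE hv => /(_ isT) h.
rewrite ltn_neqAle; apply/andP; split => //.
apply: contra vu => /eqP e; by rewrite (perm_inj (val_inj e)).
Qed.

Lemma sum_cnt n (M : finType) (sigma : profile n M) :
  (\sum_(j : M) cntS sigma setT j)%N = n.
Proof.
transitivity (\sum_(u : 'I_n) 1)%N; last by rewrite sum1_card card_ord.
rewrite [RHS](partition_big sigma xpredT) //=.
apply: eq_bigr => j _; rewrite /cntS -sum1_card.
by apply: eq_bigl => u; rewrite !inE.
Qed.

Lemma ne_opt (R : realType) n (M : finType) (p : R -> R) (s : M -> R)
  (pi : M -> {perm 'I_n}) :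
  (0 < n)%N -> (forall j, 0 < s j) -> (forall t, 0 <= t -> 0 <= p t) ->
  forall sigma : profile n M, is_NE p s pi sigma -> min_makespan p s pi sigma.
Proof.
move=> hn hs hp sigma hne tau.
apply: Cmax_le.
  apply: le_trans _ (Cmax_ge p s pi tau (Ordinal hn)).
  by rewrite C_rank Tk_ge0.
move=> i; rewrite C_rank.
set j := sigma i; set k := rankS pi sigma setT j i.
have hk : (k < cntS sigma setT j)%N by apply: rank_lt_cnt.
have fin : forall j', (cntS sigma setT j' < cntS tau setT j')%N ->
    Tk p (cntS sigma setT j').+1 (s j') <= Cmax p s pi tau.
  move=> j' hlt.
  have [u [hu hr]] := last_job pi (leq_ltn_trans (leq0n _) hlt).
  apply: le_trans _ (Cmax_ge p s pi tau u).
  rewrite C_rank hu hr prednK; last exact: leq_ltn_trans (leq0n _) hlt.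
  exact: Tk_mono.
case: (leqP (cntS sigma setT j) (cntS tau setT j)) => hle.
  have hpos : (0 < cntS tau setT j)%N by apply: leq_trans hle; apply: leq_ltn_trans hk.
  have [u [hu hr]] := last_job pi hpos.
  apply: le_trans _ (Cmax_ge p s pi tau u).
  rewrite C_rank hu hr prednK //.
  by apply: Tk_mono => //; apply: leq_trans hle.
case: (boolP [exists j', (cntS sigma setT j' < cntS tau setT j')%N]).
  move=> /existsP [j' hj'].
  apply: le_trans _ (fin j' hj').
  have := hne i j'; rewrite C_rank C_dev => h; apply: le_trans h _.
  by apply: Tk_mono => //; rewrite ltnS rank_le_cnt.
move=> /existsPn hall; exfalso.
have h1 : (\sum_(j' | j' != j) cntS tau setT j' <= \sum_(j' | j' != j) cntS sigma setT j')%N.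
  by apply: leq_sum => j' _; rewrite leqNgt hall.
have := sum_cnt tau; have := sum_cnt sigma.
rewrite (bigD1 j) // (bigD1 j (P := xpredT)) //=.
lia.
Qed.

Definition Inv (R : realType) n (M : finType) (p : R -> R) (s : M -> R)
  (pi : M -> {perm 'I_n}) (sigma : profile n M) (S : {set 'I_n}) : Prop :=
  (forall u v, u \in S -> v \notin S -> (pi (sigma u) u < pi (sigma u) v)%N) /\
  (forall i, i \in S -> forall j',
     Tk p (rankS pi sigma S (sigma i) i).+1 (s (sigma i)) <=
     Tk p (rankS pi sigma S j' i).+1 (s j')).

Lemma grow (R : realType) n (M : finType) (p : R -> R) (s : M -> R)
  (pi : M -> {perm 'I_n}) (m0 : M) :
  (forall j, 0 < s j) -> (forall t, 0 <= t -> 0 <= p t) ->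
  forall k, (k <= n)%N -> exists (sigma : profile n M) (S : {set 'I_n}), #|S| = k /\ Inv p s pi sigma S.
Proof.
move=> hs hp; elim => [|k IH] hk.
  exists [ffun => m0], set0; split; first by rewrite cards0.
  by split => [u v|i]; rewrite inE.
have [sigma [S [hS [ha hb]]]] := IH (ltnW hk).
have [u0 hu0] : exists u0, u0 \notin S.
  have : (0 < #|~: S|)%N by have := cardsC S; rewrite card_ord; lia.
  by move=> /card_gt0P [u0]; rewrite inE => h; exists u0.
have [j _ hj] := @arg_minP _ _ M m0 xpredT
   (fun j => Tk p (cntS sigma S j).+1 (s j)) isT.
case: (@arg_minnP _ u0 (fun v => v \notin S) (fun v => nat_of_ord (pi j v)) hu0)
  => u hu hmin.
set sigma' := deviate sigma u j.
have s'u : sigma' u = j by rewrite /sigma' /deviate ffunE eqxx.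
have s'v : forall v, v != u -> sigma' v = sigma v.
  by move=> v vu; rewrite /sigma' /deviate ffunE (negbTE vu).
have s'S : forall v, v \in S -> sigma' v = sigma v.
  by move=> v vS; apply: s'v; apply: contraNneq hu => <-.
exists sigma', (u |: S); split; first by rewrite cardsU1 hu hS.
have L1 : forall i j', i \in S ->
    (rankS pi sigma S j' i <= rankS pi sigma' (u |: S) j' i)%N.
  move=> i j' iS; apply: subset_leq_card; apply/subsetP => v; rewrite !inE.
  by case/and3P => vS hv hlt; rewrite vS orbT s'S // hv hlt.
have L2 : forall i, i \in S ->
    rankS pi sigma' (u |: S) (sigma i) i = rankS pi sigma S (sigma i) i.
  move=> i iS; apply: eq_card => v; rewrite !inE.
  case: (eqVneq v u) => [->|vu] /=.
    rewrite (negbTE hu) s'u; apply/negbTE; apply/andP => -[/eqP e hlt].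
    by have := ha i u iS hu; rewrite ltnNge (ltnW hlt).
  by rewrite s'v.
have L3 : forall j', rankS pi sigma' (u |: S) j' u = cntS sigma S j'.
  move=> j'; apply: eq_card => v; rewrite !inE.
  case: (eqVneq v u) => [->|vu] /=; first by rewrite (negbTE hu) ltnn !andbF.
  rewrite s'v //; case vS: (v \in S) => //=.
  case hv: (sigma v == j') => //=.
  by have := ha v u vS hu; rewrite (eqP hv).
split.
  move=> x y; rewrite !inE negb_or => /orP[/eqP->|xS] /andP[yu yS].
    rewrite s'u ltn_neqAle hmin // andbT.
    apply: contra yu => /eqP e; by rewrite eq_sym (perm_inj (val_inj e)).
  by rewrite s'S //; apply: ha.
move=> i; rewrite !inE => /orP[/eqP->|iS] j'.
  by rewrite !L3 s'u; apply: hj.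
rewrite (s'S i iS) L2 //.
apply: le_trans (hb i iS j') _.
by apply: Tk_mono => //; rewrite ltnS L1.
Qed.

Unset Implicit Arguments.
Set Strict Implicit.

Theorem theorem8 (R : realType) (n : nat) (M : finType)
    (p : R -> R) (s : M -> R) (pi : M -> {perm 'I_n}) :
  (0 < n)%N -> (0 < #|M|)%N ->
  (forall j, 0 < s j) ->
  sym_proc p ->
  (exists sigma : profile n M, is_NE p s pi sigma) /\
  (forall sigma : profile n M, is_NE p s pi sigma -> min_makespan p s pi sigma).
Proof.
move=> hn hM hs hsym.
have hp : forall t, 0 <= t -> 0 <= p t.
  case: hsym => [[a [b [ha [hb ->]]]]|[a [b [tau [ha [hb [ht ->]]]]]]] t ht0.
    by rewrite addr_ge0 // mulr_ge0.
  by rewrite le_max (ltW ht).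
split; last exact: ne_opt.
have [m0 _] := card_gt0P hM.
have [sigma [S [hS [ha hb]]]] := @grow R n M p s pi m0 hs hp n (leqnn n).
have eS : S = setT.
  apply/setP => x; rewrite inE; apply/negPn/negP => hx.
  have : (0 < #|~: S|)%N by apply/card_gt0P; exists x; rewrite inE.
  by have := cardsC S; rewrite card_ord hS; lia.
subst S; exists sigma => i j.
by rewrite C_rank C_dev; apply: hb; rewrite inE.
Qed.
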